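(* For every finite graph $G$, the graph $\mathcal{I}^1_{\mathrm{AR}}(G)$ admits a layering.
   Context: $\mathcal{I}^1_{\mathrm{AR}}(G)$ is the graph whose vertices are the nonempty independent sets of $G$, two being adjacent iff their symmetric difference has exactly one element. A layering of a graph $H$ is a partition of $V(H)$ into an ordered sequence of parts (layers) $V_1,\dots,V_p$ such that: (1) each layer is an independent set of $H$; (2) every edge of $H$ joins vertices in consecutive layers $V_i,V_{i+1}$; (3) for $2\le i\le p$, each vertex of $V_i$ has exactly $i$ neighbours in $V_{i-1}$; (4) for $1\le i\le p$, any two vertices of $V_i$ have at most one common neighbour in $V_{i-1}$ and at most one common neighbour in $V_{i+1}$. *)

(* Defs.v *)
From mathcomp Require Import all_boot.
Set Implicit Arguments. Unset Strict Implicit. Unset Printing Implicit Defensive.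

(* A finite simple graph G: vertex type T : finType, adjacency e : rel T
   (assumed symmetric and irreflexive in the theorem). *)

Definition independent (T : finType) (e : rel T) (A : {set T}) : bool :=
  [forall x in A, forall y in A, ~~ e x y].

Definition IAR_vertices (T : finType) (e : rel T) : {set {set T}} :=
  [set A : {set T} | (A != set0) && independent e A].

Definition IAR_adj (T : finType) : rel {set T} :=
  fun A B => #|(A :\: B) :|: (B :\: A)| == 1.

(* A layering of the graph H = (V, adj) (adjacency restricted to V), given as
   a number of layers p and a layer map L : layer V_i = [set v in V | L v == i],
   for 1 <= i <= p. The layers form an ordered partition of V into nonempty parts. *)
Definition layering (U : finType) (V : {set U}) (adj : rel U)
    (p : nat) (L : U -> nat) : Prop :=
      (forall v, v \in V -> 1 <= L v <= p) /\
      (forall i, 1 <= i <= p -> exists v, v \in V /\ L v = i) /\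
      (forall u v, u \in V -> v \in V -> adj u v -> L u <> L v) /\
      (forall u v, u \in V -> v \in V -> adj u v ->
         L v = (L u).+1 \/ L u = (L v).+1) /\
      (forall v, v \in V -> 2 <= L v ->
         #|[set w in V | adj v w && (L w == (L v).-1)]| = L v) /\
      (forall u v, u \in V -> v \in V -> u != v -> L u = L v ->
         #|[set w in V | [&& adj u w, adj v w & L w == (L u).-1]]| <= 1 /\
         #|[set w in V | [&& adj u w, adj v w & L w == (L u).+1]]| <= 1).

(* Main.v *)
Require Import Defs.
From mathcomp Require Import all_boot zify.

Section S.
Variable T : finType.

Lemma adj_cases (A B : {set T}) : IAR_adj A B ->
  (A \subset B /\ #|B| = #|A|.+1) \/ (B \subset A /\ #|A| = #|B|.+1).
Proof.
rewrite /IAR_adj => /eqP H.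
have Hd : (A :\: B) :&: (B :\: A) = set0.
  apply/setP => x; rewrite !inE; by case: (x \in A); case: (x \in B).
move: H; rewrite cardsU Hd cards0 subn0 => H.
have h1 := cardsID B A. have h2 := cardsID A B. rewrite setIC in h2.
case E: #|A :\: B| => [|k].
- left; split; first by rewrite -setD_eq0 -cards_eq0 E.
  lia.
- have E2 : #|B :\: A| = 0 by lia.
  right; split; first by rewrite -setD_eq0 -cards_eq0 E2.
  lia.
Qed.

Lemma indep_sub (e : rel T) (A B : {set T}) : B \subset A -> independent e A -> independent e B.
Proof.
move=> sBA /forall_inP H; apply/forall_inP => x xB; apply/forall_inP => y yB.
exact: (forall_inP (H x (subsetP sBA x xB)) y (subsetP sBA y yB)).
Qed.

Lemma sub_card (A : {set T}) k : k <= #|A| -> exists B : {set T}, B \subset A /\ #|B| = k.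
Proof.
move=> hk; exists [set x | x \in take k (enum A)]; split.
  apply/subsetP => x; rewrite inE => /mem_take; by rewrite mem_enum.
rewrite cardsE (card_uniqP (take_uniq k (enum_uniq (mem A)))) size_take -cardE.
case: ltngtP hk => //; lia.
Qed.
Lemma inter_small (u v : {set T}) : #|u| = #|v| -> u != v -> #|u :&: v| < #|u|.
Proof.
move=> Huv Hne; rewrite ltnNge; apply/negP => H.
have /eqP/setIidPl suv : u :&: v == u by rewrite eqEcard subsetIl H.
by rewrite eqEcard suv Huv leqnn in Hne.
Qed.

Lemma union_big (u v : {set T}) : #|u| = #|v| -> u != v -> #|u| < #|u :|: v|.
Proof.
move=> Huv Hne; rewrite ltnNge; apply/negP => H.
have /eqP/esym/setUidPl svu : u == u :|: v by rewrite eqEcard subsetUl H.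
by rewrite eq_sym eqEcard svu Huv leqnn in Hne.
Qed.
End S.

Theorem lemma4p3 (T : finType) (e : rel T)
    (e_sym : symmetric e) (e_irr : irreflexive e) :
  exists (p : nat) (L : {set T} -> nat),
    layering (IAR_vertices e) (@IAR_adj T) p L.
Proof.
set V := IAR_vertices e.
have inV : forall A : {set T}, (A \in V) = (A != set0) && independent e A.
  by move=> A; rewrite inE.
exists (\max_(A in V) #|A|), (fun A : {set T} => #|A|).
split; [|split; [|split; [|split; [|split]]]].
- move=> v vV; rewrite (@leq_bigmax_cond _ (mem V) (fun A : {set T} => #|A|) v vV) andbT.
  by move: vV; rewrite inV card_gt0 => /andP[].
- move=> i /andP[i1 ip].
  have cV : 0 < #|V|.
    rewrite lt0n; apply/negP => /eqP/eqP; rewrite cards_eq0 => /eqP V0.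
    move: ip; rewrite V0 big_set0; case: i i1 => //.
  have [A0 A0V A0max] := @eq_bigmax_cond _ (mem V) (fun A : {set T} => #|A|) cV.
  rewrite A0max in ip.
  have [B [sB cB]] := @sub_card _ A0 i ip.
  exists B; split => //.
  rewrite inV -card_gt0 cB i1 /=.
  move: A0V; rewrite inV => /andP[_]; exact: indep_sub.
- move=> u v _ _ /adj_cases [[_ ->]|[_ ->]]; lia.
- move=> u v _ _ /adj_cases [[_ ->]|[_ ->]]; by [left|right].
- move=> v vV v2.
  have -> : [set w in V | IAR_adj v w && (#|w| == #|v|.-1)] = [set v :\ x | x in v].
    apply/setP => w; rewrite inE; apply/idP/idP.
    + case/andP=> wV /andP[/adj_cases [[_ ->]|[swv cv]] cw]; first lia.
      have : #|v :\: w| = 1.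
        have := cardsID w v; rewrite (setIidPr swv); lia.
      move/eqP/cards1P => [x Hx].
      have : x \in v :\: w by rewrite Hx inE.
      rewrite inE => /andP[xnw xv].
      apply/imsetP; exists x => //; apply/eqP; rewrite eqEcard.
      rewrite (cardsD1 x v) xv in cv. have -> : #|v :\ x| <= #|w| by lia. rewrite andbT.
      apply/subsetP => y yw; rewrite !inE (subsetP swv y yw) andbT.
      apply/negP => /eqP yx; subst y.
      by rewrite yw in xnw.
    + case/imsetP => x xv ->.
      have cD := cardsD1 x v; rewrite xv in cD.
      apply/andP; split; last (apply/andP; split); last first.
      * apply/eqP; lia.
      * rewrite /IAR_adj.
        have -> : (v :\: (v :\ x)) :|: ((v :\ x) :\: v) = [set x].
          apply/setP => y; rewrite !inE.
          case: (eqVneq y x) => [->|]; first by rewrite xv.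
          by case: (y \in v).
        by rewrite cards1.
      * move: vV; rewrite !inV => /andP[_ iv].
        rewrite -card_gt0 (@indep_sub _ e _ _ (subsetDl v [set x]) iv) andbT; lia.
  rewrite card_in_imset //.
  move=> x y xv yv Hxy; apply/eqP; apply/negP => /negP Hne.
  have : x \in v :\ y by rewrite !inE Hne.
  by rewrite -Hxy !inE eqxx.
- move=> u v uV vV Hne Huv; split; apply/card_le1_eqP.
  + have key : forall w, w \in [set w in V | [&& IAR_adj u w, IAR_adj v w & #|w| == #|u|.-1]] -> w = u :&: v.
      move=> w; rewrite inE => /and4P[_ /adj_cases Hu /adj_cases Hv /eqP cw].
      have [swu cu] : w \subset u /\ #|u| = #|w|.+1 by case: Hu => [[_ ?]|//]; lia.
      have [swv cv] : w \subset v /\ #|v| = #|w|.+1 by case: Hv => [[_ ?]|//]; lia.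
      have := @inter_small _ _ _ Huv Hne => hi.
      apply/eqP; rewrite eqEcard subsetI swu swv /=; lia.
    by move=> w1 w2 /key -> /key ->.
  + have key : forall w, w \in [set w in V | [&& IAR_adj u w, IAR_adj v w & #|w| == #|u|.+1]] -> w = u :|: v.
      move=> w; rewrite inE => /and4P[_ /adj_cases Hu /adj_cases Hv /eqP cw].
      have suw : u \subset w by case: Hu => [[? _]|[_ ?]] //; lia.
      have svw : v \subset w by case: Hv => [[? _]|[_ ?]] //; lia.
      have := @union_big _ _ _ Huv Hne => hi.
      apply/eqP; rewrite eq_sym eqEcard subUset suw svw /=; lia.
    by move=> w1 w2 /key -> /key ->.
Qed.
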